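(* Let $\mathcal A,\mathcal B>0$, $\alpha,\beta\in(0,1)$, $h,\tau>0$, $N\ge1$, and assume $$\frac{\tau^{\alpha}(-\alpha^2+4\alpha-2)\mathcal A+\tau^{\beta}(-\beta^2+4\beta-2)\mathcal B}{h^2}\le\frac{37}{120}.$$ Fix a real $\theta$, let $s=\sin^2(\theta h/2)$, and let $\xi_0\in\mathbb C$ and $\xi_1,\dots,\xi_N$ be defined by $$\mathcal Q\,\xi_{k+1}=\mathcal P\,\xi_k-4s\Big[1+\tfrac13 s\Big]\sum_{\ell=2}^{k+1}g_\ell^{(\alpha,\beta)}\xi_{k+1-\ell},\qquad k=0,1,\dots,N-1,$$ where $\mathcal Q=[1-\frac{8}{45}s^2]+4g_0^{(\alpha,\beta)}s[1+\frac13 s]$ and $\mathcal P=[1-\frac{8}{45}s^2]-4g_1^{(\alpha,\beta)}s[1+\frac13 s]$. Then $|\xi_{k+1}|\le|\xi_0|$ for $k=0,1,\dots,N-1$.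
   Context: $\varpi_\ell^{(\sigma)}=(-1)^\ell\binom{\sigma}{\ell}$, $g_0^{(\sigma)}=\frac{1+\sigma}{2}\varpi_0^{(\sigma)}$, $g_\ell^{(\sigma)}=\frac{1+\sigma}{2}\varpi_\ell^{(\sigma)}+\frac{1-\sigma}{2}\varpi_{\ell-1}^{(\sigma)}$ ($\ell\ge1$); $\mu_\alpha=\tau^\alpha\mathcal A/h^2$, $\mu_\beta=\tau^\beta\mathcal B/h^2$, $g_\ell^{(\alpha,\beta)}=\mu_\alpha g_\ell^{(1-\alpha)}+\mu_\beta g_\ell^{(1-\beta)}$. The sum is empty for $k=0$. *)

(* Defs.v *)
From Stdlib Require Import Reals.
From Coquelicot Require Import Coquelicot.
Open Scope R_scope.

Fixpoint gbinom (sigma : R) (l : nat) : R :=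
  match l with
  | O => 1
  | S l' => gbinom sigma l' * (sigma - INR l') / INR (S l')
  end.

Definition varpi (sigma : R) (l : nat) : R := (-1) ^ l * gbinom sigma l.

Definition gw (sigma : R) (l : nat) : R :=
  match l with
  | O => (1 + sigma) / 2 * varpi sigma 0
  | S l' => (1 + sigma) / 2 * varpi sigma l + (1 - sigma) / 2 * varpi sigma l'
  end.

Definition mu (tau a X h : R) : R := Rpower tau a * X / h ^ 2.

Definition gab (A B alpha beta tau h : R) (l : nat) : R :=
  mu tau alpha A h * gw (1 - alpha) l + mu tau beta B h * gw (1 - beta) l.

(* Main.v *)
Require Import Defs.
From Stdlib Require Import Reals Lra Lia Arith.
From Coquelicot Require Import Coquelicot.
Open Scope R_scope.

Lemma le_loc (a b : nat -> R) n m :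
  (forall k, (n <= k <= m)%nat -> a k <= b k) -> sum_n_m a n m <= sum_n_m b n m.
Proof.
  revert n. induction m as [|m IH]; intros n H.
  - destruct n.
    + rewrite !sum_n_n. apply H. lia.
    + rewrite !sum_n_m_zero by lia. apply Rle_refl.
  - destruct (le_lt_dec n (S m)) as [Hn|Hn].
    + rewrite !sum_n_Sm by lia.
      change (plus ?x ?y) with (x + y).
      apply Rplus_le_compat. apply IH. intros; apply H; lia. apply H; lia.
    + rewrite !sum_n_m_zero by lia. apply Rle_refl.
Qed.

Lemma varpi0 s : varpi s 0 = 1.
Proof. unfold varpi; simpl; ring. Qed.

Lemma varpi_S s l : varpi s (S l) = varpi s l * (INR l - s) / (INR l + 1).
Proof.
  unfold varpi. change (gbinom s (S l)) with (gbinom s l * (s - INR l) / INR (S l)).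
  rewrite S_INR. simpl pow. field. pose proof (pos_INR l); lra.
Qed.

Lemma varpi_neg s l : 0 < s < 1 -> varpi s (S l) < 0.
Proof.
  intros Hs. induction l as [|l IH].
  - rewrite varpi_S, varpi0. simpl. lra.
  - rewrite varpi_S. rewrite S_INR. pose proof (pos_INR l).
    assert (0 < (INR l + 1 - s) / (INR l + 1 + 1)).
    { apply Rdiv_lt_0_compat; lra. }
    unfold Rdiv in *. nra.
Qed.

Lemma gw_SS_le s l : 0 < s < 1 -> gw s (S (S l)) <= 0.
Proof.
  intros Hs.
  assert (E : gw s (S (S l)) = varpi s (S l) * ((2*(INR l+2) - (1+s)^2)/(2*(INR l + 2)))).
  { unfold gw. rewrite (varpi_S s (S l)). rewrite S_INR. field. pose proof (pos_INR l); lra. }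
  rewrite E. pose proof (varpi_neg s l Hs). pose proof (pos_INR l).
  assert (0 <= (2*(INR l+2) - (1+s)^2)/(2*(INR l + 2))).
  { apply Rdiv_le_0_compat; nra. }
  nra.
Qed.

Lemma gw1 s : gw s 1 = (1 - 2*s - s^2)/2.
Proof. unfold gw. rewrite varpi_S, varpi0. simpl. field. Qed.

Lemma sum_varpi s n : sum_n (varpi s) n * s = -(INR n + 1) * varpi s (S n).
Proof.
  induction n as [|n IH].
  - rewrite sum_O, varpi_S, varpi0. simpl. field.
  - rewrite sum_Sn. change (plus ?x ?y) with (x + y).
    rewrite Rmult_plus_distr_r, IH. rewrite (varpi_S s (S n)). rewrite S_INR.
    field. pose proof (pos_INR n); lra.
Qed.

Lemma sum_varpi_pos s n : 0 < s < 1 -> 0 < sum_n (varpi s) n.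
Proof.
  intros Hs. pose proof (sum_varpi s n). pose proof (varpi_neg s n Hs).
  pose proof (pos_INR n). nra.
Qed.

Lemma sum_gw s n : sum_n (gw s) (S n) = (1+s)/2 * sum_n (varpi s) (S n) + (1-s)/2 * sum_n (varpi s) n.
Proof.
  induction n as [|n IH].
  - rewrite !sum_Sn, !sum_O. change (plus ?x ?y) with (x + y).
    unfold gw; simpl; ring.
  - rewrite sum_Sn. change (plus ?x ?y) with (x + y). rewrite IH.
    rewrite (sum_Sn (varpi s) (S n)), (sum_Sn (varpi s) n).
    change (plus ?x ?y) with (x + y). change (gw s (S (S n))) with ((1+s)/2 * varpi s (S (S n)) + (1-s)/2 * varpi s (S n)). repeat change (plus ?x ?y) with (x + y). match goal with |- ?a = ?b => change (@eq R a b) end; ring.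
Qed.

Lemma sum_gw_nonneg s n : 0 < s < 1 -> 0 <= sum_n (gw s) n.
Proof.
  intros Hs. destruct n.
  - rewrite sum_O. unfold gw. rewrite varpi0. lra.
  - rewrite sum_gw. pose proof (sum_varpi_pos s n Hs). pose proof (sum_varpi_pos s (S n) Hs).
    nra.
Qed.

Lemma sum_lin (c1 c2 : R) f g n :
  sum_n (fun l => c1 * f l + c2 * g l) n = c1 * sum_n f n + c2 * sum_n g n.
Proof.
  induction n as [|n IH].
  - rewrite !sum_O. match goal with |- ?a = ?b => change (@eq R a b) end; ring.
  - rewrite !sum_Sn. repeat change (plus ?x ?y) with (x + y). rewrite IH.
    match goal with |- ?a = ?b => change (@eq R a b) end; ring.
Qed.

Lemma mu_pos tau a X h : 0 < X -> 0 < h -> 0 < mu tau a X h.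
Proof.
  intros. unfold mu, Rpower. pose proof (exp_pos (a * ln tau)).
  apply Rdiv_lt_0_compat. nra. apply pow_lt; lra.
Qed.

Theorem lemma7 (A B alpha beta h tau theta : R) (N : nat) (xi : nat -> C)
  (hA : 0 < A) (hB : 0 < B)
  (halpha : 0 < alpha < 1) (hbeta : 0 < beta < 1)
  (hh : 0 < h) (htau : 0 < tau) (hN : (1 <= N)%nat)
  (hcond : (Rpower tau alpha * (- alpha ^ 2 + 4 * alpha - 2) * A
            + Rpower tau beta * (- beta ^ 2 + 4 * beta - 2) * B) / h ^ 2
           <= 37 / 120) :
  let s := sin (theta * h / 2) ^ 2 in
  let Q := (1 - 8 / 45 * s ^ 2) + 4 * gab A B alpha beta tau h 0 * s * (1 + s / 3) in
  let P := (1 - 8 / 45 * s ^ 2) - 4 * gab A B alpha beta tau h 1 * s * (1 + s / 3) in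
  (forall k : nat, (k < N)%nat ->
     (RtoC Q * xi (S k) =
      RtoC P * xi k
      - RtoC (4 * s * (1 + s / 3))
        * sum_n_m (fun l => RtoC (gab A B alpha beta tau h l) * xi (S k - l)%nat) 2 (S k))%C) ->
  forall k : nat, (k < N)%nat -> Cmod (xi (S k)) <= Cmod (xi 0%nat).
Proof.
  intros s Q P Hrec.
  set (G := gab A B alpha beta tau h) in *.
  set (a := 4 * s * (1 + s / 3)) in *.
  set (M := Cmod (xi 0%nat)).
  assert (Hsa : 0 < 1 - alpha < 1) by lra.
  assert (Hsb : 0 < 1 - beta < 1) by lra.
  pose proof (mu_pos tau alpha A h hA hh) as Hma.
  pose proof (mu_pos tau beta B h hB hh) as Hmb.
  assert (Hs : 0 <= s <= 1).
  { unfold s. pose proof (sin2_cos2 (theta * h / 2)). unfold Rsqr in *.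
    pose proof (pow2_ge_0 (sin (theta * h / 2))). pose proof (pow2_ge_0 (cos (theta * h / 2))).
    simpl in *. lra. }
  assert (Ha : 0 <= a) by (unfold a; nra).
  assert (HG0 : 0 < G 0%nat).
  { unfold G, gab, gw. rewrite !varpi0. nra. }
  assert (HG1 : G 1%nat <= 37/240).
  { unfold G, gab. rewrite !gw1. unfold mu in *.
    replace (Rpower tau alpha * A / h ^ 2 * ((1 - 2 * (1 - alpha) - (1 - alpha) ^ 2) / 2) +
       Rpower tau beta * B / h ^ 2 * ((1 - 2 * (1 - beta) - (1 - beta) ^ 2) / 2))
      with (((Rpower tau alpha * (- alpha ^ 2 + 4 * alpha - 2) * A
            + Rpower tau beta * (- beta ^ 2 + 4 * beta - 2) * B) / h ^ 2) / 2).
    lra. field. lra. }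
  assert (HGl : forall l, (2 <= l)%nat -> G l <= 0).
  { intros l Hl. destruct l as [|[|l]]; try lia.
    unfold G, gab. pose proof (gw_SS_le _ l Hsa). pose proof (gw_SS_le _ l Hsb). nra. }
  assert (HGs : forall n, 0 <= sum_n G n).
  { intros n. unfold G, gab. rewrite sum_lin.
    pose proof (sum_gw_nonneg _ n Hsa). pose proof (sum_gw_nonneg _ n Hsb). nra. }
  assert (HP : 0 <= P).
  { unfold P. fold a.
    assert (G 1%nat * a <= 37/240 * a) by (apply Rmult_le_compat_r; lra).
    unfold a in *. nra. }
  assert (HQ : 0 < Q).
  { unfold Q. fold a. assert (0 <= G 0%nat * a) by nra. unfold a in *. nra. }
  assert (HQP : Q = P + a * (G 0%nat + G 1%nat)) by (unfold Q, P, a; ring).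
  assert (Main : forall m, (m <= N)%nat -> forall j, (j <= m)%nat -> Cmod (xi j) <= M).
  { induction m as [|k IH]; intros Hm j Hj.
    - replace j with 0%nat by lia. unfold M; lra.
    - destruct (le_lt_dec j k) as [Hjk|Hjk].
      + apply IH; lia.
      + replace j with (S k) by lia.
        assert (Hk : (k < N)%nat) by lia.
        assert (IH' : forall j, (j <= k)%nat -> Cmod (xi j) <= M) by (apply IH; lia).
        specialize (Hrec k Hk).
        set (Sm := sum_n_m (fun l => (RtoC (G l) * xi (S k - l)%nat)%C) 2 (S k)) in *.
        assert (H1 : Cmod Sm <= sum_n_m (fun l => G l * (- M)) 2 (S k)).
        { pose proof (norm_sum_n_m (fun l => (RtoC (G l) * xi (S k - l)%nat)%C) 2 (S k)) as Hn.
          eapply Rle_trans. apply Hn.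
          apply le_loc. intros l Hl. change (norm ?x) with (Cmod x).
          rewrite Cmod_mult, Cmod_R, Rabs_left1 by (apply HGl; lia).
          pose proof (HGl l ltac:(lia)). pose proof (IH' (S k - l)%nat ltac:(lia)).
          pose proof (Cmod_ge_0 (xi (S k - l)%nat)). nra. }
        assert (E1 : sum_n_m (fun l => G l * - M) 2 (S k) = sum_n_m G 2 (S k) * - M)
          by apply (sum_n_m_mult_r (K:=R_Ring)).
        assert (E2 : sum_n_m G 2 (S k) = sum_n G (S k) - (G 0%nat + G 1%nat)).
        { unfold sum_n. rewrite (sum_n_m_Chasles G 0 1 (S k)) by lia.
          rewrite (sum_n_Sm G 0 0) by lia. rewrite sum_n_n.
          change (plus ?x ?y) with (x + y). change (plus ?x ?y) with (x + y). assert (HX : forall X : R, X = G 0%nat + G 1%nat + X - (G 0%nat + G 1%nat)) by (intros; ring). apply HX. }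
        rewrite E1, E2 in H1.
        assert (H2 : Q * Cmod (xi (S k)) <= P * Cmod (xi k) + a * Cmod Sm).
        { rewrite <- (Rabs_pos_eq Q) by lra. rewrite <- Cmod_R, <- Cmod_mult, Hrec.
          unfold Cminus. eapply Rle_trans. apply Cmod_triangle.
          rewrite Cmod_opp, !Cmod_mult, !Cmod_R, !Rabs_pos_eq by lra. lra. }
        pose proof (IH' k (le_n k)). pose proof (HGs (S k)).
        assert (HM : 0 <= M) by apply Cmod_ge_0.
        assert (Q * Cmod (xi (S k)) <= Q * M).
        { eapply Rle_trans. apply H2. rewrite HQP.
          assert (P * Cmod (xi k) <= P * M) by (apply Rmult_le_compat_l; lra).
          assert (a * Cmod Sm <= a * ((sum_n G (S k) - (G 0%nat + G 1%nat)) * - M))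
            by (apply Rmult_le_compat_l; lra).
          assert (0 <= a * sum_n G (S k) * M).
          { apply Rmult_le_pos; [apply Rmult_le_pos|]; lra. }
          nra. }
        apply Rmult_le_reg_l with Q; lra. }
  intros k Hk. apply (Main (S k)); lia.
Qed.
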